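(* Let $\mu$ be a pure-state ensemble on $\mathbb{C}^d$ and let $D(I)$ be its information-disturbance frontier. Let $I$ be an achievable information value lying on the upward-sloping portion of the frontier, i.e. $D(I')>D(I)$ for every achievable $I'>I$. If there is a measurement procedure achieving information gain $I$ and disturbance $D(I)$, then there is a measurement procedure with one-term conditional dynamics achieving information gain $I$ and disturbance $D(I)$.
   Context: A measurement procedure on $\mathbb{C}^d$ consists of a finite POVM $\{F_b\}$ (positive semidefinite, $\sum_b F_b=I$) together with operators $A_{bi}$ (finitely many for each $b$) with $\sum_i A_{bi}^\dagger A_{bi}=F_b$. It has one-term conditional dynamics if for each $b$ there is a single operator $A_b$ (so $A_b^\dagger A_b=F_b$). With $p(b|\psi)=\langle\psi|F_b|\psi\rangle$, $p(b)=\int d\mu(\psi)p(b|\psi)$, the information gain is $-\sum_b p(b)\log p(b)+\int d\mu(\psi)\sum_b p(b|\psi)\log p(b|\psi)$, and the disturbance is $1-\int d\mu(\psi)\sum_{b,i}|\langle\psi|A_{bi}|\psi\rangle|^2$. $D(I)$ is the infimum of the disturbance over all measurement procedures with information gain exactly $I$. *)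

(* Defs.v *)
From HB Require Import structures.
From mathcomp Require Import all_boot all_order all_algebra.
From mathcomp Require Import complex.
From mathcomp Require Import all_classical all_reals all_analysis.

Set Implicit Arguments.
Unset Strict Implicit.
Unset Printing Implicit Defensive.

Import Order.TTheory GRing.Theory Num.Theory.
Local Open Scope ring_scope.
Local Open Scope classical_set_scope.

Section QM.
Variable R : realType.
Local Notation C := R[i].

Definition adjmx (m n : nat) (A : 'M[C]_(m, n)) : 'M[C]_(n, m) :=
  (map_mx (@conjc R) A)^T.

Definition abs2 (z : C) : R := complex.Re z ^+ 2 + complex.Im z ^+ 2.

Definition braket (d : nat) (psi : 'cV[C]_d) (X : 'M[C]_d) : C :=
  (adjmx psi *m X *m psi) ord0 ord0.

Definition unit_vec (d : nat) (psi : 'cV[C]_d) : Prop :=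
  \sum_(j < d) abs2 (psi j ord0) = 1.

Definition psd (d : nat) (X : 'M[C]_d) : Prop :=
  adjmx X = X /\ forall v : 'cV[C]_d, complex.Im (braket v X) = 0 /\ 0 <= complex.Re (braket v X).

Definition is_procedure (d m : nat) (k : 'I_m -> nat)
  (F : 'I_m -> 'M[C]_d) (A : forall b : 'I_m, 'I_(k b) -> 'M[C]_d) : Prop :=
  (forall b, psd (F b)) /\
  \sum_(b < m) F b = 1%:M /\
  (forall b, \sum_(i < k b) adjmx (A b i) *m A b i = F b).

Definition is_one_term_procedure (d m : nat)
  (F : 'I_m -> 'M[C]_d) (A : 'I_m -> 'M[C]_d) : Prop :=
  is_procedure (k := fun _ => 1%N) F (fun b (_ : 'I_1) => A b).

Section Ensemble.
(* A pure-state ensemble: a probability space (T, P) together with a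
   measurable map psi from T to unit vectors of C^d; mu is the law of psi. *)
Context {dT : measure_display} {T : measurableType dT}.
Variable P : probability T R.
Variable d : nat.
Variable psi : T -> 'cV[C]_d.

Definition pure_ensemble : Prop :=
  (forall t, unit_vec (psi t)) /\
  (forall j : 'I_d, measurable_fun setT (fun t => complex.Re (psi t j ord0)) /\
                    measurable_fun setT (fun t => complex.Im (psi t j ord0))).

Definition pcond (X : 'M[C]_d) (t : T) : R := complex.Re (braket (psi t) X).

Definition pmarg (X : 'M[C]_d) : R := Rintegral P setT (pcond X).

Definition info_gain (m : nat) (F : 'I_m -> 'M[C]_d) : R :=
  - (\sum_(b < m) pmarg (F b) * ln (pmarg (F b)))
  + Rintegral P setT
      (fun t => \sum_(b < m) pcond (F b) t * ln (pcond (F b) t)).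

Definition disturbance (m : nat) (k : 'I_m -> nat)
  (A : forall b : 'I_m, 'I_(k b) -> 'M[C]_d) : R :=
  1 - Rintegral P setT
        (fun t => \sum_(b < m) \sum_(i < k b) abs2 (braket (psi t) (A b i))).

Definition achieves (I x : R) : Prop :=
  exists (m : nat) (k : 'I_m -> nat) (F : 'I_m -> 'M[C]_d)
         (A : forall b : 'I_m, 'I_(k b) -> 'M[C]_d),
    is_procedure F A /\ info_gain F = I /\ disturbance A = x.

Definition achievable (I : R) : Prop := exists x, achieves I x.

Definition frontier (I : R) : R := inf [set x | achieves I x].

End Ensemble.
End QM.

(* Main.v *)
Require Import Defs.
From HB Require Import structures.
From mathcomp Require Import all_boot all_order all_algebra.
From mathcomp Require Import complex.
From mathcomp Require Import all_classical all_reals all_analysis.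
From mathcomp Require Import ring lra.
Import Order.TTheory GRing.Theory Num.Theory.
Local Open Scope ring_scope.
Set Implicit Arguments.
Unset Strict Implicit.
Unset Printing Implicit Defensive.

Section Alg.
Variable R : realType.
Local Notation C := R[i].

Lemma Re_add (x y : C) : complex.Re (x + y) = complex.Re x + complex.Re y.
Proof. by case: x; case: y. Qed.
Lemma Im_add (x y : C) : complex.Im (x + y) = complex.Im x + complex.Im y.
Proof. by case: x; case: y. Qed.
Lemma Re_sum (I : Type) (s : seq I) (P : pred I) (F : I -> C) :
  complex.Re (\sum_(i <- s | P i) F i) = \sum_(i <- s | P i) complex.Re (F i).
Proof. exact: (big_morph _ Re_add). Qed.
Lemma Im_sum (I : Type) (s : seq I) (P : pred I) (F : I -> C) :
  complex.Im (\sum_(i <- s | P i) F i) = \sum_(i <- s | P i) complex.Im (F i).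
Proof. exact: (big_morph _ Im_add). Qed.

Lemma conjcM_self (z : C) : conjc z * z = (abs2 z)%:C%C.
Proof.
case: z => a b; rewrite /abs2 /=.
rewrite -[(_ +i* _)%C * (_ +i* _)%C]/(_ +i* _)%C.
by congr (_ +i* _)%C; ring.
Qed.

Lemma Re_conjM (c : C) : complex.Re (conjc c * c) = abs2 c.
Proof. by rewrite conjcM_self. Qed.

Lemma abs2_ge0 (z : C) : 0 <= abs2 z.
Proof. by rewrite /abs2 addr_ge0 // sqr_ge0. Qed.

Lemma conjcK' : involutive (@conjc R).
Proof. by case=> a b; rewrite /conjc opprK. Qed.

Definition dotv (d : nat) (u v : 'cV[C]_d) : C :=
  \sum_(j < d) conjc (u j ord0) * v j ord0.

Lemma adjmxE (m n : nat) (A : 'M[C]_(m, n)) i j : adjmx A i j = conjc (A j i).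
Proof. by rewrite /adjmx !mxE. Qed.

Lemma braket_dot (d : nat) (psi : 'cV[C]_d) X : braket psi X = dotv psi (X *m psi).
Proof.
rewrite /braket -mulmxA mxE /dotv; apply: eq_bigr => j _.
by rewrite adjmxE.
Qed.

Lemma dot_adj (d : nat) (u w : 'cV[C]_d) (B : 'M[C]_d) :
  dotv u (adjmx B *m w) = dotv (B *m u) w.
Proof.
rewrite /dotv.
under eq_bigr do rewrite mxE mulr_sumr.
rewrite exchange_big /=; apply: eq_bigr => k _.
rewrite mxE rmorph_sum mulr_suml; apply: eq_bigr => j _.
by rewrite adjmxE rmorphM /=; ring.
Qed.

Lemma dot_self (d : nat) (u : 'cV[C]_d) :
  dotv u u = (\sum_(j < d) abs2 (u j ord0))%:C%C.
Proof.
rewrite /dotv rmorph_sum; apply: eq_bigr => j _; exact: conjcM_self.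
Qed.

Lemma braket_adjmul (d : nat) (psi : 'cV[C]_d) (B : 'M[C]_d) :
  braket psi (adjmx B *m B) = dotv (B *m psi) (B *m psi).
Proof. by rewrite braket_dot -mulmxA dot_adj. Qed.

Lemma conj_dot (d : nat) (u v : 'cV[C]_d) : conjc (dotv u v) = dotv v u.
Proof.
rewrite /dotv rmorph_sum; apply: eq_bigr => j _.
by rewrite rmorphM /= conjcK' mulrC.
Qed.

Lemma dot_expand (d : nat) (a b : 'cV[C]_d) (c : C) :
  \sum_(j < d) conjc (a j ord0 - c * b j ord0) * (a j ord0 - c * b j ord0) =
  dotv a a - c * dotv a b - conjc c * dotv b a + conjc c * c * dotv b b.
Proof.
rewrite /dotv !mulr_sumr -!sumrB -big_split /=; apply: eq_bigr => j _.
rewrite rmorphB rmorphM /=; ring.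
Qed.

Lemma CS (d : nat) (psi : 'cV[C]_d) (B : 'M[C]_d) :
  unit_vec psi ->
  abs2 (braket psi B) <= complex.Re (braket psi (adjmx B *m B)).
Proof.
move=> u.
have one : dotv psi psi = 1 by rewrite dot_self u.
set y := B *m psi.
have hc : braket psi B = dotv psi y by rewrite braket_dot.
rewrite braket_adjmul -/y hc.
set c := dotv psi y.
have := dot_expand y psi c.
rewrite one mulr1 -(conj_dot psi y) -/c => E.
have : 0 <= complex.Re (\sum_(j < d) conjc (y j ord0 - c * psi j ord0) * (y j ord0 - c * psi j ord0)).
  rewrite Re_sum; apply: sumr_ge0 => j _; rewrite Re_conjM; exact: abs2_ge0.
rewrite E (mulrC c (conjc c)).
have -> : dotv y y - conjc c * c - conjc c * c + conjc c * c = dotv y y - conjc c * c by ring.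
rewrite Re_add.
have -> : complex.Re (- (conjc c * c)) = - complex.Re (conjc c * c) by case: (conjc c * c).
by rewrite Re_conjM subr_ge0.
Qed.

End Alg.
Section Meas.
Context (R : realType) (dT : measure_display) (T : measurableType dT).
Variable P : probability T R.

Definition good (f : T -> R) : Prop :=
  measurable_fun setT f /\ exists M : R, forall t, `|f t| <= M.

Lemma good_cst c : good (fun _ => c).
Proof. by split; [exact: measurable_cst | exists `|c|]. Qed.

Lemma good_add f g : good f -> good g -> good (fun t => f t + g t).
Proof.
move=> [mf [M hM]] [mg [N hN]]; split; first exact: measurable_realfun.measurable_funD.
exists (M + N) => t; apply: (le_trans (ler_normD _ _)); exact: lerD.
Qed.

Lemma good_opp f : good f -> good (fun t => - f t).
Proof.
move=> [mf [M hM]]; split; first exact: measurableT_comp.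
by exists M => t; rewrite normrN.
Qed.

Lemma good_sub f g : good f -> good g -> good (fun t => f t - g t).
Proof. by move=> gf gg; apply: good_add => //; exact: good_opp. Qed.

Lemma good_mul f g : good f -> good g -> good (fun t => f t * g t).
Proof.
move=> [mf [M hM]] [mg [N hN]]; split; first exact: measurable_realfun.measurable_funM.
exists (M * N) => t; rewrite normrM; apply: ler_pM => //.
Qed.

Lemma good_sum (I : Type) (s : seq I) (Q : pred I) (f : I -> T -> R) :
  (forall i, good (f i)) -> good (fun t => \sum_(i <- s | Q i) f i t).
Proof.
move=> h; elim: s => [|a s IH].
  by under [X in good X]funext do rewrite big_nil; exact: good_cst.
under [X in good X]funext do rewrite big_cons.
case: (Q a) => //; exact: good_add.
Qed.

Lemma good_integrable f : good f -> P.-integrable setT (EFin \o f).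
Proof.
move=> [mf [M hM]]; apply: measurable_bounded_integrable => //.
  by apply: (le_lt_trans (probability_le1 P measurableT)); rewrite ltey.
exists M; split; first exact: num_real.
move=> N hN t _ /=; exact: (le_trans (hM t) (ltW hN)).
Qed.

Lemma Rint_add f g : good f -> good g ->
  Rintegral P setT (fun t => f t + g t) = Rintegral P setT f + Rintegral P setT g.
Proof. by move=> gf gg; apply: RintegralD => //; exact: good_integrable. Qed.

Lemma Rint_sub f g : good f -> good g ->
  Rintegral P setT (fun t => f t - g t) = Rintegral P setT f - Rintegral P setT g.
Proof. by move=> gf gg; apply: RintegralB => //; exact: good_integrable. Qed.

Lemma Rint_cst c : Rintegral P setT (fun _ => c) = c.
Proof.
rewrite Rintegral_cst //.
have h : fine (P setT) = 1 :> R by rewrite probability_setT.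
by rewrite -[RHS]mulr1 -h.
Qed.

Lemma Rint_sum (I : Type) (s : seq I) (Q : pred I) (f : I -> T -> R) :
  (forall i, good (f i)) ->
  Rintegral P setT (fun t => \sum_(i <- s | Q i) f i t) =
  \sum_(i <- s | Q i) Rintegral P setT (f i).
Proof.
move=> h; elim: s => [|a s IH].
  by under eq_Rintegral do rewrite big_nil; rewrite big_nil Rint_cst.
under eq_Rintegral do rewrite big_cons.
rewrite big_cons; case: (Q a) => //.
rewrite Rint_add ?IH //; exact: good_sum.
Qed.

Lemma Rint_mulr f c : good f ->
  Rintegral P setT (fun t => f t * c) = Rintegral P setT f * c.
Proof. by move=> gf; apply: RintegralZr => //; exact: good_integrable. Qed.

Lemma Rint_le f g : good f -> good g -> (forall t, f t <= g t) ->
  Rintegral P setT f <= Rintegral P setT g.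
Proof.
by move=> gf gg fg; apply: le_Rintegral => //; try exact: good_integrable.
Qed.

Lemma Rint_ge0 f : (forall t, 0 <= f t) -> 0 <= Rintegral P setT f.
Proof. by move=> h; apply: Rintegral_ge0. Qed.

End Meas.
Section Real.
Variable R : realType.

Lemma ln_ge (x : R) : 0 < x -> 1 - x^-1 <= ln x.
Proof.
move=> x0.
have := expR_ge1Dx (ln x^-1).
rewrite lnK ?posrE ?invr_gt0 // lnV ?posrE //.
lra.
Qed.

Lemma xlnx_bound (x : R) : 0 <= x <= 1 -> `|x * ln x| <= 1.
Proof.
case/andP => x0 x1.
have [->|xp] := eqVneq x 0; first by rewrite mul0r normr0.
have xpos : 0 < x by rewrite lt_neqAle eq_sym xp.
have l0 : ln x <= 0 := ln_le0 x1.
have l1 := ln_ge xpos.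
rewrite ler_norml; apply/andP; split; last first.
  by apply: (le_trans (y := 0)) => //; rewrite mulr_ge0_le0.
have : x * (1 - x^-1) <= x * ln x by rewrite ler_pM2l.
rewrite mulrBr mulr1 mulfV ?gt_eqF //.
lra.
Qed.

Lemma block (J : finType) (q Q : J -> R) :
  (forall j, 0 <= q j) -> (forall j, 0 <= Q j) -> (forall j, Q j = 0 -> q j = 0) ->
  \sum_j q j * ln (Q j) - (\sum_j q j) * ln (\sum_j Q j) <=
  \sum_j q j * ln (q j) - (\sum_j q j) * ln (\sum_j q j).
Proof.
move=> q0 Q0 qQ.
set p := \sum_j q j; set PP := \sum_j Q j.
have p0 : 0 <= p by apply: sumr_ge0.
have PP0 : 0 <= PP by apply: sumr_ge0.
have [pz|pnz] := eqVneq p 0.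
  have qz : forall j, q j = 0.
    by move=> j; apply/eqP; move/eqP: pz; rewrite psumr_eq0 // => /allP /(_ j); apply; rewrite mem_index_enum.
  rewrite pz !mul0r big1 ?big1 //; move=> j _; by rewrite qz mul0r.
have ppos : 0 < p by rewrite lt_neqAle eq_sym pnz.
have PPpos : 0 < PP.
  rewrite lt_neqAle eq_sym PP0 andbT; apply/negP => /eqP PPz.
  move/eqP: pnz; apply; rewrite /p big1 // => j _; apply: qQ.
  by move/eqP: PPz; rewrite psumr_eq0 // => /allP /(_ j); rewrite mem_index_enum => /(_ isT) /eqP.
have key : forall j, q j - Q j * (p / PP) <=
    q j * ln (q j) - q j * ln (Q j) - q j * ln p + q j * ln PP.
  move=> j.
  have [qjz|qjnz] := eqVneq (q j) 0.
    rewrite qjz !mul0r !subr0 addr0 sub0r oppr_le0.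
    by apply: mulr_ge0 => //; apply: divr_ge0.
  have qpos : 0 < q j by rewrite lt_neqAle eq_sym qjnz q0.
  have Qpos : 0 < Q j.
    rewrite lt_neqAle Q0 andbT eq_sym; apply/negP => /eqP /qQ; exact/eqP.
  set r := q j * PP / (Q j * p).
  have rpos : 0 < r by rewrite /r divr_gt0 // mulr_gt0.
  have lr : ln r = ln (q j) + ln PP - ln (Q j) - ln p.
    have a1 : q j * PP \in Num.pos by rewrite posrE mulr_gt0.
    have a2 : Q j * p \in Num.pos by rewrite posrE mulr_gt0.
    have a3 : (Q j * p)^-1 \in Num.pos by rewrite posrE invr_gt0 mulr_gt0.
    have b1 : q j \in Num.pos by rewrite posrE.
    have b2 : PP \in Num.pos by rewrite posrE.
    have b3 : Q j \in Num.pos by rewrite posrE.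
    have b4 : p \in Num.pos by rewrite posrE.
    rewrite /r (lnM a1 a3) (lnV a2) (lnM b3 b4) (lnM b1 b2).
    ring.
  have := ln_ge rpos.
  have rinv : q j * r^-1 = Q j * (p / PP).
    rewrite /r invfM invrK; field.
    by apply/andP; split; [apply: lt0r_neq0 | apply: lt0r_neq0].
  move=> h.
  have : q j * (1 - r^-1) <= q j * ln r by rewrite ler_pM2l.
  rewrite mulrBr mulr1 rinv lr.
  move=> h2; apply: (le_trans h2).
  rewrite [X in _ <= X](_ : _ = q j * (ln (q j) + ln PP - ln (Q j) - ln p)) //; ring.
have S : \sum_j (q j - Q j * (p / PP)) = 0.
  rewrite sumrB -mulr_suml -/p -/PP; field; exact: lt0r_neq0.
have : 0 <= \sum_j (q j * ln (q j) - q j * ln (Q j) - q j * ln p + q j * ln PP).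
  by rewrite [X in X <= _](esym S); apply: ler_sum => j _; exact: key.
have -> : \sum_j (q j * ln (q j) - q j * ln (Q j) - q j * ln p + q j * ln PP) =
   (\sum_j q j * ln (q j)) - (\sum_j q j * ln (Q j)) - p * ln p + p * ln PP.
  rewrite big_split /= sumrB sumrB -!mulr_suml //.
lra.
Qed.

End Real.

Section Info.
Context (R : realType) (dT : measure_display) (T : measurableType dT).
Variable P : probability T R.
Local Notation Rint f := (Rintegral P setT f).

Lemma good01 (f : T -> R) : measurable_fun setT f -> (forall t, 0 <= f t <= 1) -> good f.
Proof.
move=> mf h; split => //; exists 1 => t.
by case/andP: (h t) => h0 h1; rewrite ger0_norm.
Qed.

Lemma good_xlnx (f : T -> R) : measurable_fun setT f -> (forall t, 0 <= f t <= 1) ->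
  good (fun t => f t * ln (f t)).
Proof.
move=> mf h; split.
  apply: measurable_realfun.measurable_funM => //.
  exact: measurableT_comp (@measurable_realfun.measurable_ln R) mf.
by exists 1 => t; apply: xlnx_bound.
Qed.

Lemma good_mulc (f : T -> R) c : good f -> good (fun t => f t * c).
Proof. by move=> gf; apply: good_mul => //; exact: good_cst. Qed.

Lemma ae_zero (s : T -> R) : good s -> (forall t, 0 <= s t) -> Rint s = 0 ->
  ae_eq P setT (EFin \o s) (cst 0%E).
Proof.
move=> gs s0 si.
apply: integral_ae_eq => //; first exact: good_integrable.

move=> E _ mE.
rewrite integral0; apply/eqP; rewrite eq_le; apply/andP; split; last first.
  by apply: integral_ge0 => t _; rewrite lee_fin.
have fin := integrable_fin_num measurableT (good_integrable P gs).
apply: (le_trans (ge0_subset_integral P mE measurableT _ _ _)) => //.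
- by apply/measurable_realfun.measurable_EFinP; case: gs.
- by move=> t _; rewrite lee_fin.
rewrite -(fineK fin).
by move: si; rewrite /Rintegral => ->.
Qed.


Lemma info_mono (I0 : finType) (J : I0 -> finType) (q : forall b, J b -> T -> R) :
  (forall b j, measurable_fun setT (q b j)) ->
  (forall b j t, 0 <= q b j t) ->
  (forall b t, \sum_j q b j t <= 1) ->
  - (\sum_b Rint (fun t => \sum_j q b j t) * ln (Rint (fun t => \sum_j q b j t)))
  + Rint (fun t => \sum_b (\sum_j q b j t) * ln (\sum_j q b j t))
  <= - (\sum_b \sum_j Rint (q b j) * ln (Rint (q b j)))
  + Rint (fun t => \sum_b \sum_j q b j t * ln (q b j t)).
Proof.
move=> hm h0 h1.
have q1 : forall b j t, q b j t <= 1.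
  move=> b j t; apply: le_trans (h1 b t).
  by rewrite (bigD1 j) //= lerDl sumr_ge0.
have gq : forall b j, good (q b j).
  by move=> b j; apply: good01 => // t; rewrite h0 q1.
have gp : forall b, good (fun t => \sum_j q b j t) by move=> b; exact: good_sum.
have p01 : forall b t, 0 <= \sum_j q b j t <= 1.
  by move=> b t; rewrite h1 andbT sumr_ge0.
have gxq : forall b j, good (fun t => q b j t * ln (q b j t)).
  by move=> b j; apply: good_xlnx => // t; rewrite h0 q1.
have gxp : forall b, good (fun t => (\sum_j q b j t) * ln (\sum_j q b j t)).
  by move=> b; apply: good_xlnx => //; case: (gp b).
set QQ := fun b j => Rint (q b j).
set PP := fun b => Rint (fun t => \sum_j q b j t).
have ePP : forall b, PP b = \sum_j QQ b j by move=> b; rewrite /PP Rint_sum.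
have QQ0 : forall b j, 0 <= QQ b j by move=> b j; apply: Rint_ge0.
set g := fun t => \sum_b \sum_j q b j t * ln (q b j t)
                 - \sum_b (\sum_j q b j t) * ln (\sum_j q b j t).
set h := fun t => \sum_b \sum_j q b j t * ln (QQ b j)
                 - \sum_b (\sum_j q b j t) * ln (PP b).
have gg : good g.
  by apply: good_sub; apply: good_sum => b //; apply: good_sum.
have gh : good h.
  apply: good_sub; apply: good_sum => b //; [apply: good_sum => j|];
  exact: good_mulc.
have Eg : Rint g = Rint (fun t => \sum_b \sum_j q b j t * ln (q b j t))
                 - Rint (fun t => \sum_b (\sum_j q b j t) * ln (\sum_j q b j t)).
  rewrite /g Rint_sub //; [apply: good_sum => b|exact: good_sum].
  exact: good_sum.
have Eh : Rint h = \sum_b \sum_j QQ b j * ln (QQ b j) - \sum_b PP b * ln (PP b).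
  rewrite /h Rint_sub; last 2 first.
  - by apply: good_sum => b; apply: good_sum => j; exact: good_mulc.
  - by apply: good_sum => b; exact: good_mulc.
  rewrite Rint_sum; last by move=> b; apply: good_sum => j; exact: good_mulc.
  rewrite Rint_sum; last by move=> b; exact: good_mulc.
  congr (_ - _); apply: eq_bigr => b _.
    rewrite Rint_sum; last by move=> j; exact: good_mulc.
    by apply: eq_bigr => j _; rewrite Rint_mulr.
  by rewrite Rint_mulr.
set s := fun t => \sum_b \sum_j (if QQ b j == 0 then q b j t else 0).
have gs : good s.
  apply: good_sum => b; apply: good_sum => j.
  by case: (QQ b j == 0); [exact: gq | exact: good_cst].
have s0 : forall t, 0 <= s t.
  move=> t; apply: sumr_ge0 => b _; apply: sumr_ge0 => j _.
  by case: (QQ b j == 0).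
have si : Rint s = 0.
  rewrite /s Rint_sum; last first.
    move=> b; apply: good_sum => j.
    by case: (QQ b j == 0); [exact: gq | exact: good_cst].
  apply: big1 => b _; rewrite Rint_sum; last first.
    by move=> j; case: (QQ b j == 0); [exact: gq | exact: good_cst].
  apply: big1 => j _.
  case: eqP => [e|_]; last exact: Rint_cst.
  exact: e.
have ae := ae_zero gs s0 si.
have pw : forall t, s t = 0 -> 0 <= g t - h t.
  move=> t st.
  have z : forall b j, QQ b j = 0 -> q b j t = 0.
    move=> b j e.
    have zb : \sum_j (if QQ b j == 0 then q b j t else 0) = 0.
      apply: (psumr_eq0P _ st) => // i _.
      by apply: sumr_ge0 => j' _; case: (QQ i j' == 0).
    have := @psumr_eq0P _ _ _ _ _ zb j isT.
    rewrite e eqxx; apply => i _.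
    by case: (QQ b i == 0).
  have -> : g t - h t = \sum_b ((\sum_j q b j t * ln (q b j t) -
        (\sum_j q b j t) * ln (\sum_j q b j t)) -
        (\sum_j q b j t * ln (QQ b j) - (\sum_j q b j t) * ln (PP b))).
    by rewrite /g /h !sumrB.
  apply: sumr_ge0 => b _; rewrite subr_ge0 ePP.
  apply: block => j; [exact: h0 | exact: QQ0 | exact: z].
have E : Rint (fun t => g t - h t) = Rint (fun t => Num.max (g t - h t) 0).
  rewrite /Rintegral; congr fine.
  apply: (ae_eq_integral (EFin \o (fun t => Num.max (g t - h t) 0))) => //.
  - by apply/measurable_realfun.measurable_EFinP; case: (good_sub gg gh).
  - apply/measurable_realfun.measurable_EFinP.
    apply: measurable_realfun.measurable_maxr; last exact: measurable_cst.
    by case: (good_sub gg gh).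
  apply: filterS ae => t /(_ I) hs _ /=.
  have st : s t = 0 by case: hs.
  by rewrite max_l //; exact: pw.
have key : Rint h <= Rint g.
  rewrite -subr_ge0 -Rint_sub // E; apply: Rint_ge0 => t.
  by rewrite le_max lexx orbT.
rewrite Eg Eh -/PP in key.
rewrite -/PP.
have -> : \sum_b \sum_j Rint (q b j) * ln (Rint (q b j)) = \sum_b \sum_j QQ b j * ln (QQ b j) by [].
lra.
Qed.

End Info.
Section Cm.
Context (R : realType) (dT : measure_display) (T : measurableType dT).
Local Notation C := R[i].

Definition cmeas (f : T -> C) : Prop :=
  measurable_fun setT (fun t => complex.Re (f t)) /\
  measurable_fun setT (fun t => complex.Im (f t)).

Lemma cmeas_cst c : cmeas (fun _ => c).
Proof. by split; exact: measurable_cst. Qed.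

Lemma cmeas_add f g : cmeas f -> cmeas g -> cmeas (fun t => f t + g t).
Proof.
move=> [f1 f2] [g1 g2]; split.
- under eq_fun do rewrite Re_add; exact: measurable_realfun.measurable_funD.
- under eq_fun do rewrite Im_add; exact: measurable_realfun.measurable_funD.
Qed.

Lemma Re_mul (x y : C) : complex.Re (x * y) = complex.Re x * complex.Re y - complex.Im x * complex.Im y.
Proof. by case: x => a b; case: y => c e. Qed.
Lemma Im_mul (x y : C) : complex.Im (x * y) = complex.Re x * complex.Im y + complex.Im x * complex.Re y.
Proof. by case: x => a b; case: y => c e. Qed.

Lemma cmeas_mul f g : cmeas f -> cmeas g -> cmeas (fun t => f t * g t).
Proof.
move=> [f1 f2] [g1 g2]; split.
- under eq_fun do rewrite Re_mul.
  by apply: measurable_realfun.measurable_funB; apply: measurable_realfun.measurable_funM.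
- under eq_fun do rewrite Im_mul.
  by apply: measurable_realfun.measurable_funD; apply: measurable_realfun.measurable_funM.
Qed.

Lemma cmeas_conj f : cmeas f -> cmeas (fun t => conjc (f t)).
Proof.
move=> [f1 f2]; split.
- by under eq_fun => t do (have -> : complex.Re (conjc (f t)) = complex.Re (f t) by case: (f t)).
- under eq_fun => t do (have -> : complex.Im (conjc (f t)) = - complex.Im (f t) by case: (f t)).
  exact: measurableT_comp.
Qed.

Lemma cmeas_sum (I : Type) (s : seq I) (Q : pred I) (f : I -> T -> C) :
  (forall i, cmeas (f i)) -> cmeas (fun t => \sum_(i <- s | Q i) f i t).
Proof.
move=> h; elim: s => [|a s IH].
  by under eq_fun do rewrite big_nil; exact: cmeas_cst.
under eq_fun do rewrite big_cons.
case: (Q a) => //; exact: cmeas_add.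
Qed.

Lemma cmeas_braket (d : nat) (psi : T -> 'cV[C]_d) (X : 'M[C]_d) :
  (forall j : 'I_d, cmeas (fun t => psi t j ord0)) ->
  cmeas (fun t => braket (psi t) X).
Proof.
move=> h.
under eq_fun do rewrite braket_dot /dotv.
apply: cmeas_sum => j; apply: cmeas_mul; first exact: cmeas_conj.
under eq_fun do rewrite mxE.
apply: cmeas_sum => k; apply: cmeas_mul => //; exact: cmeas_cst.
Qed.

Lemma cmeas_abs2 f : cmeas f -> measurable_fun setT (fun t => abs2 (f t)).
Proof.
move=> [f1 f2]; rewrite /abs2.
by apply: measurable_realfun.measurable_funD; apply: measurable_realfun.measurable_funM.
Qed.

End Cm.

Section Proc.
Context (R : realType).
Local Notation C := R[i].

Lemma braket_sum (d : nat) (v : 'cV[C]_d) (I : Type) (s : seq I) (Q : pred I)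
  (X : I -> 'M[C]_d) :
  braket v (\sum_(i <- s | Q i) X i) = \sum_(i <- s | Q i) braket v (X i).
Proof. by rewrite /braket mulmx_sumr mulmx_suml summxE. Qed.

Lemma Re_realc (x : R) : complex.Re (x%:C)%C = x. Proof. by []. Qed.
Lemma Im_realc (x : R) : complex.Im (x%:C)%C = 0. Proof. by []. Qed.

Lemma adj_ge0 (d : nat) (v : 'cV[C]_d) (B : 'M[C]_d) :
  0 <= complex.Re (braket v (adjmx B *m B)).
Proof.
rewrite braket_adjmul dot_self Re_realc; apply: sumr_ge0 => j _; exact: abs2_ge0.
Qed.

Lemma adjmx_adjmul (d : nat) (B : 'M[C]_d) : adjmx (adjmx B *m B) = adjmx B *m B.
Proof.
apply/matrixP => i j; rewrite adjmxE !mxE rmorph_sum; apply: eq_bigr => k _.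
by rewrite !adjmxE rmorphM /= conjcK' mulrC.
Qed.

Lemma psd_adj (d : nat) (B : 'M[C]_d) : psd (adjmx B *m B).
Proof.
split; first exact: adjmx_adjmul.
move=> v; split; last exact: adj_ge0.
by rewrite braket_adjmul dot_self Im_realc.
Qed.

Variables (m : nat) (k : 'I_m -> nat) (d : nat) (F : 'I_m -> 'M[C]_d)
  (A : forall b : 'I_m, 'I_(k b) -> 'M[C]_d).
Hypothesis hproc : is_procedure F A.

Lemma pc_ge0 (v : 'cV[C]_d) b : 0 <= complex.Re (braket v (F b)).
Proof. by case: hproc => h _; case: (h b) => _ /(_ v) []. Qed.

Lemma pc_sum (v : 'cV[C]_d) : unit_vec v -> \sum_b complex.Re (braket v (F b)) = 1.
Proof.
move=> u; case: hproc => _ [hs _].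
by rewrite -Re_sum -braket_sum hs braket_dot mul1mx dot_self u.
Qed.

Lemma pc_le1 (v : 'cV[C]_d) b : unit_vec v -> complex.Re (braket v (F b)) <= 1.
Proof.
move=> u; rewrite -(pc_sum u) (bigD1 b) //= lerDl.
by apply: sumr_ge0 => i _; exact: pc_ge0.
Qed.

Lemma pc_split (v : 'cV[C]_d) (b : 'I_m) :
  complex.Re (braket v (F b)) =
  \sum_i complex.Re (braket v (adjmx (@A b i) *m @A b i)).
Proof. by case: hproc => _ [_ h]; rewrite -(h b) braket_sum Re_sum. Qed.

Lemma dist_pointwise (v : 'cV[C]_d) : unit_vec v ->
  \sum_b \sum_i abs2 (braket v (@A b i)) <= 1.
Proof.
move=> u; rewrite -(pc_sum u); apply: ler_sum => b _; rewrite (pc_split v b).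
apply: ler_sum => i _; exact: CS.
Qed.

End Proc.

Section Main.
Context (R : realType) (dT : measure_display) (T : measurableType dT).
Variable P : probability T R.
Variables (d : nat) (psi : T -> 'cV[R[i]]_d).
Hypothesis hpure : pure_ensemble psi.

Lemma psi_cmeas j : cmeas (fun t => psi t j ord0).
Proof. by case: hpure => _ /(_ j) []. Qed.

Lemma dist_ge0 (m : nat) (k : 'I_m -> nat) (F : 'I_m -> 'M[R[i]]_d)
  (A : forall b : 'I_m, 'I_(k b) -> 'M[R[i]]_d) :
  is_procedure F A -> 0 <= disturbance P psi A.
Proof.
move=> hp; rewrite /disturbance subr_ge0.
set f := fun t => _.
have f01 : forall t, 0 <= f t <= 1.
  move=> t; rewrite /f (dist_pointwise hp) //; last by case: hpure.
  by rewrite andbT; apply: sumr_ge0 => b _; apply: sumr_ge0 => i _; exact: abs2_ge0.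
have gf : good f.
  apply: good01 => //.
  apply: measurable_sum => b; apply: measurable_sum => i.
  apply: cmeas_abs2; apply: cmeas_braket; exact: psi_cmeas.
rewrite -[X in _ <= X](Rint_cst P 1).
apply: Rint_le => //; first exact: good_cst.
by move=> t; case/andP: (f01 t).
Qed.

End Main.

Unset Implicit Arguments.
Set Strict Implicit.

Theorem mainTheorem3 (R : realType) (dT : measure_display) (T : measurableType dT)
  (P : probability T R) (d : nat) (psi : T -> 'cV[R[i]]_d) (I : R) :
  pure_ensemble psi ->
  achievable P psi I ->
  (forall I' : R, achievable P psi I' -> I < I' ->
     frontier P psi I < frontier P psi I') ->
  achieves P psi I (frontier P psi I) ->
  exists (m : nat) (F : 'I_m -> 'M[R[i]]_d) (A : 'I_m -> 'M[R[i]]_d),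
    is_one_term_procedure F A /\
    info_gain P psi F = I /\
    disturbance P psi (k := fun _ => 1%N) (fun b (_ : 'I_1) => A b) = frontier P psi I.
Proof.
move=> hpure _ hup [m [k [F [A [hp [hinfo hdist]]]]]].
pose X := {b : 'I_m & 'I_(k b)}.
pose n := #|{: X}|.
pose A' := fun i : 'I_n => A (tag (enum_val i)) (tagged (enum_val i)).
pose F' := fun i : 'I_n => adjmx (A' i) *m A' i.
have hsum : forall (V : nmodType) (g : forall b, 'I_(k b) -> V),
    \sum_(i < n) g (tag (enum_val i)) (tagged (enum_val i)) = \sum_b \sum_j g b j.
  move=> V g.
  transitivity (\sum_(x in {: X}) g (tag x) (tagged x)).
    by rewrite [RHS]big_enum_val.
  by rewrite sig_big_dep; apply: eq_bigl => x.
have hone : is_one_term_procedure F' A'.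
  split; first by move=> i; exact: psd_adj.
  split; last by move=> i; rewrite big_ord1.
  rewrite /F' /A' (hsum _ (fun b j => adjmx (A b j) *m A b j)).
  case: hp => _ [hs hsplit].
  by rewrite -hs; apply: eq_bigr => b _; rewrite hsplit.
have hunit : forall t, unit_vec (psi t) by case: hpure.
pose q := fun b j t => pcond psi (adjmx (A b j) *m A b j) t.
have eF : forall b, pcond psi (F b) = (fun t => \sum_j q b j t).
  by move=> b; apply: funext => t; rewrite /q /pcond (pc_split hp).
have hI : I <= info_gain P psi F'.
  rewrite -hinfo /info_gain /pmarg.
  rewrite /F' /A' (hsum _ (fun b j =>
     Rintegral P setT (pcond psi (adjmx (A b j) *m A b j)) *
     ln (Rintegral P setT (pcond psi (adjmx (A b j) *m A b j))))).
  under [X in _ <= _ + X]eq_Rintegral => t _ do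
    rewrite (hsum _ (fun b j => pcond psi (adjmx (A b j) *m A b j) t *
       ln (pcond psi (adjmx (A b j) *m A b j) t))).
  under eq_bigr => b _ do rewrite eF.
  under [X in _ + X <= _]eq_Rintegral => t _ do (under eq_bigr => b _ do rewrite eF).
  apply: info_mono.
  - move=> b j; rewrite /q /pcond.
    by case: (cmeas_braket (adjmx (A b j) *m A b j) (psi_cmeas hpure)).
  - by move=> b j t; exact: adj_ge0.
  - move=> b t; rewrite /q /pcond -(pc_split hp). apply: (pc_le1 hp); exact: hunit.
have hD : disturbance P psi (k := fun _ => 1%N) (fun b (_ : 'I_1) => A' b) =
    frontier P psi I.
  rewrite -hdist /disturbance; congr (1 - _); apply: eq_Rintegral => t _.
  under eq_bigr do rewrite big_ord1.
  by rewrite /A' (hsum _ (fun b j => abs2 (braket (psi t) (A b j)))).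
have hach : achieves P psi (info_gain P psi F') (frontier P psi I).
  by exists n, (fun _ => 1%N), F', (fun b (_ : 'I_1) => A' b).
have hlb : has_lbound [set x | achieves P psi (info_gain P psi F') x].
  exists 0 => x [m' [k' [F'' [A'' [hp' [_ <-]]]]]].
  exact: (dist_ge0 P hpure hp').
case: (ltgtP I (info_gain P psi F')) => [lt | gt | eq].
- exfalso.
  have h1 := hup _ (ex_intro _ _ hach) lt.
  have h2 := ge_inf hlb hach.
  rewrite /frontier in h1 h2.
  by move: (lt_le_trans h1 h2); rewrite ltxx.
- by move: (lt_le_trans gt hI); rewrite ltxx.
- by exists n, F', A'; split => //; split.
Qed.
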